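(* The set $N_0:=S^2\setminus(A\cup -A)$ contains no three mutually orthogonal unit vectors.
   Context: For $t\in[-\tfrac12,0)$ define points of $S^2\subset\mathbb{R}^3$: $\mathbf r_1(t)=\big(\tfrac{1}{\sqrt2},\,t,\,\sqrt{\tfrac12-t^2}\big)$, $\mathbf r_2(t)=\Big(-\tfrac{\frac12+t}{1+t},\,\tfrac1{\sqrt2},\,\tfrac1{\sqrt2}\tfrac{\sqrt{\frac12-t^2}}{1+t}\Big)$, $\mathbf r_3(t)=\mathbf r_1(t)\times\mathbf r_2(t)=\Big(-\tfrac1{\sqrt2}\tfrac{\sqrt{\frac12-t^2}}{1+t},\,-\sqrt{\tfrac12-t^2},\,\tfrac{\frac12+t+t^2}{1+t}\Big)$. Let $R_{\pi/2}$ be the rotation $(x,y,z)\mapsto(-y,x,z)$ (by $\pi/2$ about the $z$-axis). Define $\mathbf r_0:[0,\tfrac14)\to S^2$ by $\mathbf r_0(t)=\mathbf r_1(6t-\tfrac12)$ for $t\in[0,\tfrac1{12})$, $\mathbf r_0(t)=R_{\pi/2}^3\mathbf r_2(6t-1)$ for $t\in[\tfrac1{12},\tfrac16)$, $\mathbf r_0(t)=R_{\pi/2}^2\mathbf r_3(6t-\tfrac32)$ for $t\in[\tfrac16,\tfrac14)$. Define $\mathbf R:[0,1)\to S^2$ by $\mathbf R(t)=R_{\pi/2}^k\,\mathbf r_0(t-\tfrac k4)$ for $t\in[\tfrac k4,\tfrac{k+1}4)$, $k=0,1,2,3$, and extend $\mathbf R$ to $\mathbb R$ periodically with period $1$: $\mathbf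 R(t):=\mathbf R(t-\lfloor t\rfloor)$. The image $\Gamma=\mathbf R(\mathbb R)$ is a closed curve on $S^2$; let $A\subseteq S^2$ be the closed region bounded by $\Gamma$ containing the north pole, i.e. $A=\Gamma\cup C$, where $C$ is the connected component of $S^2\setminus\Gamma$ containing $(0,0,1)$. Also $-A:=\{-n:n\in A\}$. *)

(* Defs.v *)
From HB Require Import structures.
From mathcomp Require Import all_boot all_order all_algebra.
From mathcomp Require Import all_classical all_reals all_analysis.
Set Implicit Arguments. Unset Strict Implicit. Unset Printing Implicit Defensive.
Import Order.TTheory GRing.Theory Num.Theory numFieldNormedType.Exports.
Local Open Scope ring_scope.
Local Open Scope classical_set_scope.

Section Curve.
Variable R : realType.

Definition pt := (R * R * R)%type.
Definition mkpt (x y z : R) : pt := ((x, y), z).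
Definition px (p : pt) : R := p.1.1.
Definition py (p : pt) : R := p.1.2.
Definition pz (p : pt) : R := p.2.

Definition dot (p q : pt) : R := px p * px q + py p * py q + pz p * pz q.
Definition cross (p q : pt) : pt :=
  mkpt (py p * pz q - pz p * py q) (pz p * px q - px p * pz q)
       (px p * py q - py p * px q).
Definition neg (p : pt) : pt := mkpt (- px p) (- py p) (- pz p).

Definition S2 : set pt := [set p | dot p p = 1].

Definition rot (p : pt) : pt := mkpt (- py p) (px p) (pz p).

Definition s2 : R := Num.sqrt 2.

Definition r1 (t : R) : pt := mkpt (1 / s2) t (Num.sqrt (2^-1 - t ^+ 2)).
Definition r2 (t : R) : pt :=
  mkpt (- ((2^-1 + t) / (1 + t))) (1 / s2)
       ((1 / s2) * (Num.sqrt (2^-1 - t ^+ 2) / (1 + t))).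
Definition r3 (t : R) : pt := cross (r1 t) (r2 t).

(* r0 on [0, 1/4) *)
Definition r0 (t : R) : pt :=
  if t < 12^-1 then r1 (6 * t - 2^-1)
  else if t < 6^-1 then iter 3 rot (r2 (6 * t - 1))
  else iter 2 rot (r3 (6 * t - 3 / 2)).

Definition Rcurve (t : R) : pt :=
  let s := t - (Num.floor t)%:~R in
  let k := Num.floor (4 * s) in
  iter `|k|%N rot (r0 (s - k%:~R / 4)).

Definition Gamma : set pt := range Rcurve.

Definition north : pt := mkpt 0 0 1.

Definition Ccomp : set pt := @connected_component (R * R * R)%type (S2 `\` Gamma) north.

Definition Aregion : set pt := Gamma `|` Ccomp.

Definition negA : set pt := [set n | Aregion (neg n)].

Definition N0 : set pt := S2 `\` (Aregion `|` negA).

End Curve.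

(* Main.v *)
Require Import Defs.
From HB Require Import structures.
From mathcomp Require Import all_boot all_order all_algebra.
From mathcomp Require Import all_classical all_reals all_analysis.
From mathcomp Require Import ring lra.
Import Order.TTheory GRing.Theory Num.Theory numFieldNormedType.Exports.
Set Implicit Arguments. Unset Strict Implicit.
Local Open Scope ring_scope.

Section Core.
Variable R : realType.
Implicit Types a b x y : R.

Definition Fc x y := [/\ 2 * x ^+ 2 <= 1, 2 * y ^+ 2 <= 1 &
  4 * (x ^+ 2 * y ^+ 2) <= (Num.sqrt (1 - 2 * x ^+ 2) + Num.sqrt (1 - 2 * y ^+ 2)) ^+ 2].

Lemma sq_sqrt (t : R) : 0 <= t -> Num.sqrt t ^+ 2 = t.
Proof. by move=> h; rewrite sqr_sqrtr. Qed.

Lemma Kbig a b : 2 * a ^+ 2 <= 1 -> 2 * b ^+ 2 <= 1 ->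
  (Num.sqrt (1 - 2 * a ^+ 2) + Num.sqrt (1 - 2 * b ^+ 2)) ^+ 2 < 4 * (a ^+ 2 * b ^+ 2) ->
  3/4 < a ^+ 2 + b ^+ 2.
Proof.
move=> ha hb.
set al := Num.sqrt (1 - 2 * a ^+ 2); set be := Num.sqrt (1 - 2 * b ^+ 2).
have al2 : al ^+ 2 = 1 - 2 * a ^+ 2 by apply: sq_sqrt; lra.
have be2 : be ^+ 2 = 1 - 2 * b ^+ 2 by apply: sq_sqrt; lra.
have al0 : 0 <= al by apply: sqrtr_ge0.
have be0 : 0 <= be by apply: sqrtr_ge0.
have a0 : 0 <= a ^+ 2 by apply: sqr_ge0.
have b0 : 0 <= b ^+ 2 by apply: sqr_ge0.
move=> h; rewrite ltNge; apply/negP => hab.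
have e : 4 * (a ^+ 2 * b ^+ 2) = (1 - al ^+ 2) * (1 - be ^+ 2) by rewrite al2 be2; ring.
move: h; rewrite e; apply/negP; rewrite -leNgt.
have P1 : al * be <= 1 by nra.
have P0 : 0 <= al * be by nra.
nra.
Qed.

Lemma Main a1 a2 a3 b1 b2 b3 :
  a1 ^+ 2 + a2 ^+ 2 + a3 ^+ 2 = 1 -> b1 ^+ 2 + b2 ^+ 2 + b3 ^+ 2 = 1 ->
  a1 * b1 + a2 * b2 + a3 * b3 = 0 ->
  1 < 2 * a1 ^+ 2 -> 1 < 2 * b2 ^+ 2 ->
  2 * a3 ^+ 2 <= 1 -> 2 * b3 ^+ 2 <= 1 ->
  4 * (a3 ^+ 2 * b3 ^+ 2) <= (Num.sqrt (1 - 2 * a3 ^+ 2) + Num.sqrt (1 - 2 * b3 ^+ 2)) ^+ 2.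
Proof.
move=> sa sb sab h1 h2 ha hb.
set al := Num.sqrt (1 - 2 * a3 ^+ 2); set be := Num.sqrt (1 - 2 * b3 ^+ 2).
have al2 : al ^+ 2 = 1 - 2 * a3 ^+ 2 by apply: sq_sqrt; lra.
have be2 : be ^+ 2 = 1 - 2 * b3 ^+ 2 by apply: sq_sqrt; lra.
have al0 : 0 <= al by apply: sqrtr_ge0.
have be0 : 0 <= be by apply: sqrtr_ge0.
have a20 : 0 <= a2 ^+ 2 by apply: sqr_ge0.
have b10 : 0 <= b1 ^+ 2 by apply: sqr_ge0.
have a30 : 0 <= a3 ^+ 2 by apply: sqr_ge0.
have b30 : 0 <= b3 ^+ 2 by apply: sqr_ge0.
have id1 : 4 * (a1 * b1 + a2 * b2) ^+ 2 + 4 * (a1 * b2 - a2 * b1) ^+ 2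
   = (1 + al ^+ 2) * (1 + be ^+ 2).
  have -> : (1 + al ^+ 2) * (1 + be ^+ 2) = 4 * ((1 - a3 ^+ 2) * (1 - b3 ^+ 2)).
    by rewrite al2 be2; ring.
  have -> : 1 - a3 ^+ 2 = a1 ^+ 2 + a2 ^+ 2 by lra.
  have -> : 1 - b3 ^+ 2 = b1 ^+ 2 + b2 ^+ 2 by lra.
  ring.
have q1 : 1 < 4 * (a1 ^+ 2 * b2 ^+ 2) by nra.
have q2 : 4 * (a2 ^+ 2 * b1 ^+ 2) <= al ^+ 2 * be ^+ 2.
  have : 2 * a2 ^+ 2 <= al ^+ 2 by lra.
  have : 2 * b1 ^+ 2 <= be ^+ 2 by lra.
  nra.
have P1 : al * be <= 1 by nra.
have P0 : 0 <= al * be by nra.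
have nsq : forall t : R, `|t| ^+ 2 = t ^+ 2 by move=> t; rewrite real_normK ?num_real.
have r1 : 1 < `|2 * (a1 * b2)|.
  have := nsq (2 * (a1 * b2)); have := normr_ge0 (2 * (a1 * b2)).
  rewrite !exprMn; nra.
have r2 : `|2 * (a2 * b1)| <= al * be.
  have := nsq (2 * (a2 * b1)); have := normr_ge0 (2 * (a2 * b1)).
  rewrite !exprMn; nra.
have r3 : 1 - al * be <= `|2 * (a1 * b2 - a2 * b1)|.
  have := lerB_dist (2 * (a1 * b2)) (2 * (a2 * b1)).
  rewrite -mulrBr => h; lra.
have q3 : (1 - al * be) ^+ 2 <= 4 * (a1 * b2 - a2 * b1) ^+ 2.
  have := nsq (2 * (a1 * b2 - a2 * b1)); rewrite exprMn => h.
  nra.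
have e3 : a3 * b3 = - (a1 * b1 + a2 * b2) by lra.
have -> : 4 * (a3 ^+ 2 * b3 ^+ 2) = 4 * (a1 * b1 + a2 * b2) ^+ 2.
  by rewrite -exprMn e3 sqrrN.
nra.
Qed.


Lemma notFc a b : ~ Fc a b ->
  [\/ 1 < 2 * a ^+ 2, 1 < 2 * b ^+ 2 |
   [/\ 2 * a ^+ 2 <= 1, 2 * b ^+ 2 <= 1 &
     (Num.sqrt (1 - 2 * a ^+ 2) + Num.sqrt (1 - 2 * b ^+ 2)) ^+ 2 < 4 * (a ^+ 2 * b ^+ 2)]].
Proof.
move=> h; case: (lerP (2 * a ^+ 2) 1) => ha; last by apply: Or31.
case: (lerP (2 * b ^+ 2) 1) => hb; last by apply: Or32.
case: (lerP (4 * (a ^+ 2 * b ^+ 2)) ((Num.sqrt (1 - 2 * a ^+ 2) + Num.sqrt (1 - 2 * b ^+ 2)) ^+ 2)) => hc.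
  by exfalso; apply: h; split.
by apply: Or33.
Qed.

Lemma CoreF a1 a2 a3 b1 b2 b3 :
  a1 ^+ 2 + a2 ^+ 2 + a3 ^+ 2 = 1 -> b1 ^+ 2 + b2 ^+ 2 + b3 ^+ 2 = 1 ->
  a1 * b1 + a2 * b2 + a3 * b3 = 0 ->
  [\/ Fc a1 b1, Fc a2 b2 | Fc a3 b3].
Proof.
move=> sa sb sab.
case: (boolP `[< Fc a1 b1 >]) => [/asboolP|/asboolP] h1; first by apply: Or31.
case: (boolP `[< Fc a2 b2 >]) => [/asboolP|/asboolP] h2; first by apply: Or32.
case: (boolP `[< Fc a3 b3 >]) => [/asboolP|/asboolP] h3; first by apply: Or33.
exfalso.
have z1 : 0 <= a1 ^+ 2 by apply: sqr_ge0.
have z2 : 0 <= a2 ^+ 2 by apply: sqr_ge0.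
have z3 : 0 <= a3 ^+ 2 by apply: sqr_ge0.
have w1 : 0 <= b1 ^+ 2 by apply: sqr_ge0.
have w2 : 0 <= b2 ^+ 2 by apply: sqr_ge0.
have w3 : 0 <= b3 ^+ 2 by apply: sqr_ge0.
have M := @Main.
have N := @notFc.
case: (N _ _ h1) => [r1|l1|[p1 q1 k1]];
case: (N _ _ h2) => [r2|l2|[p2 q2 k2]];
case: (N _ _ h3) => [r3|l3|[p3 q3 k3]];
  try (move: (@Kbig _ _ p1 q1 k1) => K1); try (move: (@Kbig _ _ p2 q2 k2) => K2);
  try (move: (@Kbig _ _ p3 q3 k3) => K3); try lra.
all: first [ (have := M a1 a2 a3 b1 b2 b3 ltac:(lra) ltac:(lra) ltac:(lra) ltac:(assumption) ltac:(assumption) ltac:(assumption) ltac:(assumption); lra) | (have := M a1 a3 a2 b1 b3 b2 ltac:(lra) ltac:(lra) ltac:(lra) ltac:(assumption) ltac:(assumption) ltac:(assumption) ltac:(assumption); lra) | (have := M a2 a1 a3 b2 b1 b3 ltac:(lra) ltac:(lra) ltac:(lra) ltac:(assumption) ltac:(assumption) ltac:(assumption) ltac:(assumption); lra) | (have := M a2 a3 a1 b2 b3 b1 ltac:(lra) ltac:(lra) ltac:(lra) ltac:(assumption) ltac:(assumption) ltac:(assumption) ltac:(assumption); lra) | (have := M a3 a1 a2 b3 b1 b2 ltac:(lra) ltac:(lra) ltac:(lra) ltac:(assumption) ltac:(assumption) ltac:(assumption) ltac:(assumption); lra) | (have := M a3 a2 a1 b3 b2 b1 ltac:(lra) ltac:(lra)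 ltac:(lra) ltac:(assumption) ltac:(assumption) ltac:(assumption) ltac:(assumption); lra) ].
Qed.

End Core.

Section G.
Variable R : realType.
Implicit Types x y t : R.
Local Notation rot := (@Defs.rot R).

Definition SF x y := [/\ 2 * x ^+ 2 < 1, 2 * y ^+ 2 < 1 &
  4 * (x ^+ 2 * y ^+ 2) < (Num.sqrt (1 - 2 * x ^+ 2) + Num.sqrt (1 - 2 * y ^+ 2)) ^+ 2].

Lemma SF_swap x y : SF x y -> SF y x.
Proof. by case=> h1 h2 h3; split => //; rewrite (mulrC (y ^+ 2)) (addrC (Num.sqrt (1 - 2 * y ^+ 2))). Qed.

Lemma SF_neg x y : SF x y -> SF (- x) y.
Proof. by rewrite /SF sqrrN. Qed.

Lemma Fc_swap x y : Fc x y -> Fc y x.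
Proof. by case=> h1 h2 h3; split => //; rewrite (mulrC (y ^+ 2)) (addrC (Num.sqrt (1 - 2 * y ^+ 2))). Qed.

Lemma Fc_neg x y : Fc x y -> Fc (- x) y.
Proof. by rewrite /Fc sqrrN. Qed.

Lemma px_rot (p : pt R) : px (rot p) = - py p. Proof. by []. Qed.
Lemma py_rot (p : pt R) : py (rot p) = px p. Proof. by []. Qed.
Lemma pz_rot (p : pt R) : pz (rot p) = pz p. Proof. by []. Qed.

Lemma SF_rot (p : pt R) : SF (px (rot p)) (py (rot p)) -> SF (px p) (py p).
Proof.
by rewrite px_rot py_rot => /SF_neg; rewrite opprK => /SF_swap.
Qed.

Lemma SF_iter n (p : pt R) : SF (px (iter n rot p)) (py (iter n rot p)) -> SF (px p) (py p).
Proof. by elim: n => [//|n IH] /= /SF_rot /IH. Qed.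

Lemma Fc_rot (p : pt R) : Fc (px p) (py p) -> Fc (px (rot p)) (py (rot p)).
Proof. by rewrite px_rot py_rot => /Fc_swap /Fc_neg. Qed.

Lemma Fc_iter n (p : pt R) : Fc (px p) (py p) -> Fc (px (iter n rot p)) (py (iter n rot p)).
Proof. by elim: n => [//|n IH] /= /IH /Fc_rot. Qed.

Lemma s2sq : s2 R ^+ 2 = 2.
Proof. by rewrite sqr_sqrtr // ler0n. Qed.

Lemma s2gt0 : 0 < s2 R.
Proof. by rewrite sqrtr_gt0 ltr0n. Qed.

Lemma inv_s2sq : (1 / s2 R) ^+ 2 = 2^-1.
Proof. by rewrite expr_div_n s2sq expr1n mul1r. Qed.

Lemma sqrt_sq_ge0 (u : R) : 0 <= u -> Num.sqrt (u ^+ 2) = u.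
Proof. by move=> h; rewrite sqrtr_sqr ger0_norm. Qed.

Lemma corner_eq t : -2^-1 <= t < 0 ->
  let S := Num.sqrt (2^-1 - t ^+ 2) in
  let X := (1 / s2 R) * S / (1 + t) in
  (Num.sqrt (1 - 2 * X ^+ 2) + Num.sqrt (1 - 2 * S ^+ 2)) ^+ 2 = 4 * (X ^+ 2 * S ^+ 2).
Proof.
case/andP => h1 h2 S X.
have S2 : S ^+ 2 = 2^-1 - t ^+ 2 by rewrite sqr_sqrtr //; nra.
have t1 : 0 < 1 + t by lra.
have t1' : 1 + t != 0 by rewrite gt_eqF.
have eX : 1 - 2 * X ^+ 2 = (s2 R * ((t + 2^-1) / (1 + t))) ^+ 2.
  rewrite /X !expr_div_n !exprMn exprVn S2 s2sq expr1n; field => //.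
have eS : 1 - 2 * S ^+ 2 = (s2 R * (- t)) ^+ 2.
  by rewrite exprMn s2sq S2 sqrrN; field.
have s0 := @s2gt0.
have n1 : 0 <= s2 R * ((t + 2^-1) / (1 + t)).
  by apply: mulr_ge0; [lra | apply: divr_ge0; lra].
have n2 : 0 <= s2 R * (- t) by apply: mulr_ge0; lra.
rewrite eX eS !sqrt_sq_ge0 //.
rewrite /X !expr_div_n !exprMn exprVn S2 s2sq expr1n.
rewrite -mulrDr exprMn s2sq; field => //.
Qed.


Lemma r3_xy t : -2^-1 <= t < 0 ->
  px (r3 t) = - ((1 / s2 R) * Num.sqrt (2^-1 - t ^+ 2) / (1 + t)) /\
  py (r3 t) = - Num.sqrt (2^-1 - t ^+ 2).
Proof.
case/andP => h1 h2.
have t1' : 1 + t != 0 by rewrite gt_eqF //; lra.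
rewrite /r3 /cross /r1 /r2 /px /py /pz /mkpt /=.
set S := Num.sqrt _; set c := 1 / s2 R.
have cc : c * c = 2^-1 by rewrite -expr2 inv_s2sq.
split; first by field.
rewrite [c * (c * _)]mulrA cc; field => //.
Qed.

Lemma r0_notSF s : 0 <= s < 4^-1 -> ~ SF (px (r0 s)) (py (r0 s)).
Proof.
case/andP => hs0 hs1; rewrite /r0.
case: ifP => [_|_].
  by case; rewrite /r1 /px /= inv_s2sq; lra.
case: ifP => [_|/negbT h6].
  move/SF_iter; case=> _; rewrite /r2 /py /= inv_s2sq; lra.
move/SF_iter; case=> _ _.
have ht : -2^-1 <= 6 * s - 3 / 2 < 0.
  rewrite -leNgt in h6; apply/andP; split; lra.
have [-> ->] := r3_xy ht.
rewrite !sqrrN (corner_eq ht); lra.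
Qed.

Lemma Rcurve_decomp t : exists n (s : R), 0 <= s < 4^-1 /\ Rcurve t = iter n rot (r0 s).
Proof.
rewrite /Rcurve.
set s := t - (Num.floor t)%:~R.
set k := Num.floor (4 * s).
exists `|k|%N, (s - k%:~R / 4); split => //.
have h1 := floor_le t; have h2 := floorD1_gt t.
have h3 := floor_le (4 * s); have h4 := floorD1_gt (4 * s).
rewrite -/k intrD in h3 h4 *.
rewrite intrD in h2.
apply/andP; split; lra.
Qed.

Lemma Gamma_notSF p : Gamma p -> ~ SF (px p) (py p).
Proof.
case=> t _ <-.
have [n [s [hs ->]]] := Rcurve_decomp t.
by move/SF_iter; apply: r0_notSF.
Qed.


Lemma Rcurve_at (j : nat) (s : R) : (j < 4)%N -> 0 <= s < 4^-1 ->
  Rcurve (j%:R / 4 + s) = iter j rot (r0 s).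
Proof.
move=> hj /andP[hs0 hs1].
have hjR : (j%:R : R) <= 3 by rewrite (ler_nat R j 3); rewrite -ltnS.
have hj0 : (0 : R) <= j%:R by apply: ler0n.
rewrite /Rcurve.
have -> : Num.floor (j%:R / 4 + s) = 0.
  apply: floor_def; rewrite /= add0r; apply/andP; split; rewrite ?mulr0z ?mulr1z; lra.
have -> : Num.floor (4 * (j%:R / 4 + s - (0:int)%:~R)) = j%:Z.
  apply: floor_def; rewrite intrD /=; apply/andP; split;
  rewrite mulr0z ?mulr1z -[(j%:Z)%:~R]/(j%:R : R); lra.
rewrite absz_nat.
congr (iter j _ (r0 _)).
rewrite -[(j%:Z)%:~R]/(j%:R : R) mulr0z; lra.
Qed.

Lemma Gamma_at (j : nat) (s : R) : (j < 4)%N -> 0 <= s < 4^-1 ->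
  Gamma (iter j rot (r0 s)).
Proof. by move=> hj hs; exists (j%:R / 4 + s) => //; rewrite Rcurve_at. Qed.

Lemma iter4 (p : pt R) : iter 4 rot p = p.
Proof. by case: p => [[a b] c]; rewrite /= /Defs.rot /mkpt /px /py /pz /= !opprK. Qed.

Lemma Gamma_rot p : Gamma p -> Gamma (rot p).
Proof.
case=> t _ <-.
have [n [s [hs ->]]] := Rcurve_decomp t.
rewrite -iterS.
have -> : iter n.+1 rot (r0 s) = iter (n.+1 %% 4)%N rot (r0 s).
  rewrite {1}(div.divn_eq n.+1 4) iterD; elim: (n.+1 %/ 4)%N => [//|m IH].
  by rewrite mulSn iterD iter4.
by apply: Gamma_at => //; rewrite ltn_mod.
Qed.

Lemma Gamma_iter n p : Gamma p -> Gamma (iter n rot p).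
Proof. by elim: n => [//|n IH] /IH /Gamma_rot. Qed.


Lemma pt_eta (p : pt R) : p = mkpt (px p) (py p) (pz p).
Proof. by case: p => [[a b] c]. Qed.

Lemma Gamma_back j p : (j <= 4)%N -> Gamma (iter j rot p) -> Gamma p.
Proof.
move=> hj /(Gamma_iter (4 - j)); rewrite -iterD subnK //.
by rewrite iter4.
Qed.

Definition Good (p : pt R) := [/\ S2 p, 0 < pz p, Fc (px p) (py p) & ~ SF (px p) (py p)].

Lemma Good_rot p : Good p -> Good (rot p).
Proof.
case=> h1 h2 h3 h4; split => //.
- by move: h1; rewrite /S2 /dot /= /px /py /pz /=; move=> <-; ring.
- by apply: Fc_rot.
- by move=> /SF_rot.
Qed.

Lemma Good_iter n p : Good p -> Good (iter n rot p).
Proof. by elim: n => [//|n IH] /IH /Good_rot. Qed.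

Lemma sqrt_eq_of_sq (a b : R) : 0 <= a -> 0 <= b -> a ^+ 2 = b ^+ 2 -> a = b.
Proof. by move=> ha hb e; rewrite -(sqrt_sq_ge0 ha) -(sqrt_sq_ge0 hb) e. Qed.

Lemma x_is_c x : 0 < x -> 2 * x ^+ 2 = 1 -> x = 1 / s2 R.
Proof.
move=> h0 h; apply: sqrt_eq_of_sq; first lra.
  by apply: divr_ge0 => //; apply: ltW; apply: s2gt0.
rewrite inv_s2sq; lra.
Qed.

Lemma z_of (p : pt R) : S2 p -> 0 < pz p -> pz p = Num.sqrt (1 - px p ^+ 2 - py p ^+ 2).
Proof.
rewrite /S2 /dot /= => e hz.
rewrite -(sqrt_sq_ge0 (ltW hz)); congr Num.sqrt; rewrite -e; ring.
Qed.

Lemma arc_neg (p : pt R) : S2 p -> 0 < pz p -> px p = 1 / s2 R -> -2^-1 <= py p < 0 -> Gamma p.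
Proof.
move=> hS hz hx /andP[hy1 hy2].
have hs : 0 <= (py p + 2^-1) / 6 < 4^-1 by apply/andP; split; lra.
have := @Gamma_at 0 _ isT hs; rewrite /= /r0.
have -> : (py p + 2^-1) / 6 < 12^-1 by lra.
have -> : 6 * ((py p + 2^-1) / 6) - 2^-1 = py p by field.
rewrite /r1 -hx; suff -> : Num.sqrt (2^-1 - py p ^+ 2) = pz p by rewrite -pt_eta.
rewrite (z_of hS hz) hx inv_s2sq; congr Num.sqrt; field.
by [].
Qed.


Lemma px_mk (a b c : R) : px (mkpt a b c) = a. Proof. by []. Qed.
Lemma py_mk (a b c : R) : py (mkpt a b c) = b. Proof. by []. Qed.
Lemma pz_mk (a b c : R) : pz (mkpt a b c) = c. Proof. by []. Qed.

Lemma S2_eq (p : pt R) : S2 p -> px p ^+ 2 + py p ^+ 2 + pz p ^+ 2 = 1.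
Proof. by move=> h; rewrite !expr2; exact: h. Qed.

Lemma iter3 (q : pt R) : iter 3 rot q = mkpt (py q) (- px q) (pz q).
Proof. by case: q => [[a b] c]; rewrite /= /Defs.rot /mkpt /px /py /pz /= ?opprK. Qed.

Lemma iter2 (q : pt R) : iter 2 rot q = mkpt (- px q) (- py q) (pz q).
Proof. by case: q => [[a b] c]; rewrite /= /Defs.rot /mkpt /px /py /pz /= ?opprK. Qed.

Lemma arc_pos (p : pt R) : S2 p -> 0 < pz p -> px p = 1 / s2 R -> 0 <= py p < 2^-1 -> Gamma p.
Proof.
move=> hS hz hx /andP[hy1 hy2].
set y := py p in hy1 hy2.
have y1 : 1 - y != 0 by rewrite gt_eqF //; lra.
set ta := (y - 2^-1) / (1 - y).
have e1 : (ta + 2^-1) * (1 - y) = y / 2 by rewrite /ta; field.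
have e2 : ta * (1 - y) = y - 2^-1 by rewrite /ta; field.
have ta1 : -2^-1 <= ta by nra.
have ta2 : ta < 0 by nra.
have t1 : 1 + ta != 0 by rewrite gt_eqF //; lra.
have hs : 0 <= (ta + 1) / 6 < 4^-1 by apply/andP; split; lra.
have := @Gamma_at 0 _ isT hs; rewrite /= /r0.
have -> : ((ta + 1) / 6 < 12^-1) = false by apply/negbTE; rewrite -leNgt; lra.
have -> : (ta + 1) / 6 < 6^-1 by lra.
have -> : 6 * ((ta + 1) / 6) - 1 = ta by field.
suff E : p = iter 3 rot (r2 ta) by rewrite -E.
rewrite iter3 {1}(pt_eta p) /r2 px_mk py_mk pz_mk; congr mkpt.
- by rewrite hx.
- by rewrite opprK -[py p](mulfK t1); congr (_ / _); nra.
have hS' : 0 <= 2^-1 - ta ^+ 2 by nra.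
have s0 := s2gt0.
apply: sqrt_eq_of_sq.
- lra.
- apply: mulr_ge0; first by apply: divr_ge0; lra.
  by apply: divr_ge0; [apply: sqrtr_ge0 | lra].
rewrite exprMn inv_s2sq expr_div_n sqr_sqrtr //.
have hS2 := S2_eq hS; rewrite hx inv_s2sq in hS2.
have -> : pz p ^+ 2 = 2^-1 - y ^+ 2 by rewrite /y; lra.
rewrite /ta; field; apply/andP; split; [exact: y1 | apply/negP => /eqP H; lra].
Qed.


Lemma uniq_corner (x x0 y B : R) : 0 <= x -> 0 <= x0 -> 0 < y -> 0 <= B ->
  (Num.sqrt (1 - 2 * x ^+ 2) + B) ^+ 2 = 4 * (x ^+ 2 * y ^+ 2) ->
  (Num.sqrt (1 - 2 * x0 ^+ 2) + B) ^+ 2 = 4 * (x0 ^+ 2 * y ^+ 2) -> x = x0.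
Proof.
move=> hx hx0 hy hB e e0.
have E : Num.sqrt (1 - 2 * x ^+ 2) + B = 2 * x * y.
  apply: sqrt_eq_of_sq; [by apply: addr_ge0 => //; apply: sqrtr_ge0 | by apply: mulr_ge0; [apply: mulr_ge0|lra]; lra |].
  by rewrite e; ring.
have E0 : Num.sqrt (1 - 2 * x0 ^+ 2) + B = 2 * x0 * y.
  apply: sqrt_eq_of_sq; [by apply: addr_ge0 => //; apply: sqrtr_ge0 | by apply: mulr_ge0; [apply: mulr_ge0|lra]; lra |].
  by rewrite e0; ring.
clear e e0.
case: (ltgtP x x0) => // h.
- have : Num.sqrt (1 - 2 * x0 ^+ 2) <= Num.sqrt (1 - 2 * x ^+ 2).
    by apply: ler_wsqrtr; rewrite !expr2; nra.
  have : x * y < x0 * y by rewrite ltr_pM2r.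
  lra.
- have : Num.sqrt (1 - 2 * x ^+ 2) <= Num.sqrt (1 - 2 * x0 ^+ 2).
    by apply: ler_wsqrtr; rewrite !expr2; nra.
  have : x0 * y < x * y by rewrite ltr_pM2r.
  lra.
Qed.

End G.

Section G2.
Variable R : realType.
Implicit Types x y t : R.
Local Notation rot := (@Defs.rot R).
Lemma corner_pt (p : pt R) : S2 p -> 0 < pz p -> 0 < px p -> 2 * px p ^+ 2 <= 1 ->
  2^-1 <= py p -> 2 * py p ^+ 2 < 1 ->
  (Num.sqrt (1 - 2 * px p ^+ 2) + Num.sqrt (1 - 2 * py p ^+ 2)) ^+ 2
     = 4 * (px p ^+ 2 * py p ^+ 2) -> Gamma p.
Proof.
move=> hS hz hx hx1 hy1 hy2 heq.
have hS2 := S2_eq hS.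
have a0 : 0 < 2^-1 - py p ^+ 2 by lra.
set ta := - Num.sqrt (2^-1 - py p ^+ 2).
have ta2 : ta ^+ 2 = 2^-1 - py p ^+ 2 by rewrite /ta sqrrN sqr_sqrtr //; lra.
have ta0 : ta < 0 by rewrite /ta oppr_lt0 sqrtr_gt0.
have y2 : 4^-1 <= py p ^+ 2.
  have h := hy1; rewrite expr2; nra.
have ta1 : -2^-1 <= ta.
  have : ta ^+ 2 <= 4^-1 by lra.
  rewrite expr2 => h; nra.
have hta : -2^-1 <= ta < 0 by apply/andP.
have t1 : 1 + ta != 0 by rewrite gt_eqF //; lra.
have hs : 0 <= (ta + 3/2) / 6 < 4^-1 by apply/andP; split; lra.
have := @Gamma_at R 0 _ isT hs; rewrite /= /r0.
have -> : ((ta + 3/2) / 6 < 12^-1) = false by apply/negbTE; rewrite -leNgt; lra.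
have -> : ((ta + 3/2) / 6 < 6^-1) = false by apply/negbTE; rewrite -leNgt; lra.
have -> : 6 * ((ta + 3/2) / 6) - 3 / 2 = ta by field.
suff E : p = iter 2 rot (r3 ta) by rewrite -E.
have [ex ey] := r3_xy hta.
have eS : Num.sqrt (2^-1 - ta ^+ 2) = py p.
  rewrite ta2 (_ : 2^-1 - (2^-1 - py p ^+ 2) = py p ^+ 2); last by ring.
  by apply: sqrt_sq_ge0; lra.
have hxX : px p = 1 / s2 R * py p / (1 + ta).
  apply: (@uniq_corner R _ _ (py p) (Num.sqrt (1 - 2 * py p ^+ 2))).
  + lra.
  + apply: mulr_ge0; [apply: mulr_ge0; [|lra] | rewrite invr_ge0; lra].
    by apply: divr_ge0 => //; apply: ltW; apply: s2gt0.
  + lra.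
  + by apply: sqrtr_ge0.
  + by [].
  + by have := corner_eq hta; rewrite eS.
rewrite iter2 ex ey eS opprK opprK {1}(pt_eta p); congr mkpt => //.
have ez : pz (r3 ta) = (2^-1 + ta + ta ^+ 2) / (1 + ta).
  rewrite /r3 /cross pz_mk /r1 /r2 px_mk py_mk.
  rewrite !px_mk !py_mk -expr2 inv_s2sq; field => //.
rewrite ez.
have s0 := @s2gt0 R.
have hd : 0 < 1 + ta by lra.
apply: sqrt_eq_of_sq.
- lra.
- apply: divr_ge0; [nra | lra].
have -> : pz p ^+ 2 = 1 - px p ^+ 2 - py p ^+ 2 by lra.
rewrite hxX !exprMn expr1n mul1r exprVn s2sq.
have -> : py p ^+ 2 = 2^-1 - ta ^+ 2 by lra.
field => //.
Qed.
End G2.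

Section G4.
Variable R : realType.
Implicit Types x y t : R.
Local Notation rot := (@Defs.rot R).

Lemma sqrt0' : Num.sqrt (0 : R) = 0. Proof. exact: sqrtr0. Qed.

Lemma xpos_case (q : pt R) : Good q -> 0 < px q -> 2 * px q ^+ 2 = 1 -> Gamma q.
Proof.
case=> hS hz [f1 f2 f3] hns hx hx2.
have hxc := x_is_c hx hx2.
have e0 : 1 - 2 * px q ^+ 2 = 0 by lra.
rewrite e0 sqrtr0 add0r sqr_sqrtr in f3; last by lra.
have ex : px q ^+ 2 = 2^-1 by lra.
rewrite ex in f3.
have hy : py q ^+ 2 <= 4^-1 by lra.
have hy1 : -2^-1 <= py q by rewrite expr2 in hy; nra.
have hy2 : py q <= 2^-1 by rewrite expr2 in hy; nra.
case: (ltP (py q) 0) => h0.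
  by apply: arc_neg => //; apply/andP.
case: (ltP (py q) 2^-1) => h1.
  by apply: arc_pos => //; apply/andP.
have ey : py q = 2^-1 by lra.
apply: corner_pt => //; rewrite ?ey; try lra.
rewrite e0 sqrtr0 add0r ex sqr_sqrtr; first by rewrite !expr2; field.
rewrite !expr2; lra.
Qed.

Lemma quad_case (q : pt R) : Good q -> 0 < px q -> 0 < py q ->
  2 * px q ^+ 2 < 1 -> 2 * py q ^+ 2 < 1 -> Gamma q.
Proof.
case=> hS hz [f1 f2 f3] hns hx hy hx1 hy1.
have heq : (Num.sqrt (1 - 2 * px q ^+ 2) + Num.sqrt (1 - 2 * py q ^+ 2)) ^+ 2
     = 4 * (px q ^+ 2 * py q ^+ 2).
  apply/eqP; rewrite eq_le f3 andbT leNgt; apply/negP => h.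
  by apply: hns; split.
set A := Num.sqrt (1 - 2 * px q ^+ 2) in heq.
set B := Num.sqrt (1 - 2 * py q ^+ 2) in heq.
have A0 : 0 <= A by apply: sqrtr_ge0.
have B0 : 0 <= B by apply: sqrtr_ge0.
have B2 : B ^+ 2 = 1 - 2 * py q ^+ 2 by rewrite sqr_sqrtr //; lra.
have i1 : B ^+ 2 <= (A + B) ^+ 2 by rewrite !expr2; nra.
have y2 : 0 < py q ^+ 2 by apply: exprn_gt0.
have i2 : 4 * (px q ^+ 2 * py q ^+ 2) < 2 * py q ^+ 2 by nra.
have i3 : 4^-1 < py q ^+ 2 by lra.
have hyh : 2^-1 <= py q by rewrite expr2 in i3; nra.
by apply: corner_pt => //; lra.
Qed.

Lemma Good_Gamma (p : pt R) : Good p -> Gamma p.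
Proof.
move=> G; have G' := G; case: G' => hS hz [f1 f2 f3] hns.
have Gj := fun j => Good_iter j G.
case: (ltP (2 * px p ^+ 2) 1) => hx; last first.
  have hx2 : 2 * px p ^+ 2 = 1 by lra.
  case: (ltgtP (px p) 0) => h0.
  - apply: (@Gamma_back _ 2) => //; apply: xpos_case (Gj 2%N) _ _;
      rewrite iter2 px_mk ?sqrrN //; lra.
  - by apply: xpos_case.
  - by move: hx2; rewrite h0 expr0n /=; lra.
case: (ltP (2 * py p ^+ 2) 1) => hy; last first.
  have hy2 : 2 * py p ^+ 2 = 1 by lra.
  case: (ltgtP (py p) 0) => h0.
  - apply: (@Gamma_back _ 1) => //; apply: xpos_case (Gj 1%N) _ _;
      rewrite /= px_rot ?sqrrN //; lra.
  - apply: (@Gamma_back _ 3) => //; apply: xpos_case (Gj 3%N) _ _;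
      rewrite iter3 px_mk //; lra.
  - by move: hy2; rewrite h0 expr0n /=; lra.
have nz : px p != 0 /\ py p != 0.
  split; apply/negP => /eqP e; apply: hns; split => //.
  - rewrite e (expr2 (0:R)) !mul0r !mulr0 ?subr0 sqrtr1.
    have : 0 <= Num.sqrt (1 - 2 * py p ^+ 2) by apply: sqrtr_ge0.
    move=> h; rewrite expr2; nra.
  - rewrite e (expr2 (0:R)) !mul0r !mulr0 ?subr0 sqrtr1.
    have : 0 <= Num.sqrt (1 - 2 * px p ^+ 2) by apply: sqrtr_ge0.
    move=> h; rewrite expr2; nra.
case: nz => nx ny.
case: (ltgtP (px p) 0) => hx0; last by rewrite hx0 eqxx in nx.
- case: (ltgtP (py p) 0) => hy0; last by rewrite hy0 eqxx in ny.
  + apply: (@Gamma_back _ 2) => //; apply: quad_case (Gj 2%N) _ _ _ _;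
      rewrite iter2 ?px_mk ?py_mk ?sqrrN //; lra.
  + apply: (@Gamma_back _ 3) => //; apply: quad_case (Gj 3%N) _ _ _ _;
      rewrite iter3 ?px_mk ?py_mk ?sqrrN //; lra.
- case: (ltgtP (py p) 0) => hy0; last by rewrite hy0 eqxx in ny.
  + apply: (@Gamma_back _ 1) => //; apply: quad_case (Gj 1%N) _ _ _ _;
      rewrite /= ?px_rot ?py_rot ?sqrrN //; lra.
  + by apply: quad_case.
Qed.

End G4.

Section G5.
Variable R : realType.
Local Notation rot := (@Defs.rot R).
Local Open Scope classical_set_scope.

Definition gam (x y : R) (l : R) : pt R :=
  mkpt (l * x) (l * y) (Num.sqrt (1 - l ^+ 2 * (x ^+ 2 + y ^+ 2))).

Lemma gam_cont (x y : R) : continuous (gam x y).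
Proof.
move=> l; rewrite /continuous_at /gam /mkpt.
apply: (@cvg_pair R (R * R)%type R (nbhs l) (nbhs (l * x, l * y)) (nbhs (Num.sqrt (1 - l ^+ 2 * (x ^+ 2 + y ^+ 2))))); first apply: (@cvg_pair R R R (nbhs l) (nbhs (l * x)) (nbhs (l * y))).
- by apply: cvgM; [apply: cvg_id | apply: cvg_cst].
- by apply: cvgM; [apply: cvg_id | apply: cvg_cst].
- apply: continuous_comp; last exact: sqrt_continuous.
  apply: cvgB; first exact: cvg_cst.
  apply: cvgM; last exact: cvg_cst.
  by rewrite expr2; apply: cvgM; apply: cvg_id.
Qed.


Lemma SF_scale (x y l : R) : 0 <= l <= 1 -> SF x y -> SF (l * x) (l * y).
Proof.
case/andP => l0 l1 [h1 h2 h3].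
have l2 : l ^+ 2 <= 1 by rewrite expr2; nra.
have x0 : 0 <= x ^+ 2 by apply: sqr_ge0.
have y0 : 0 <= y ^+ 2 by apply: sqr_ge0.
have l20 : 0 <= l ^+ 2 by apply: sqr_ge0.
have ex : (l * x) ^+ 2 <= x ^+ 2 by rewrite exprMn; nra.
have ey : (l * y) ^+ 2 <= y ^+ 2 by rewrite exprMn; nra.
split; try lra.
have sx : Num.sqrt (1 - 2 * x ^+ 2) <= Num.sqrt (1 - 2 * (l * x) ^+ 2).
  by apply: ler_wsqrtr; lra.
have sy : Num.sqrt (1 - 2 * y ^+ 2) <= Num.sqrt (1 - 2 * (l * y) ^+ 2).
  by apply: ler_wsqrtr; lra.
have a0 : 0 <= Num.sqrt (1 - 2 * x ^+ 2) by apply: sqrtr_ge0.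
have b0 : 0 <= Num.sqrt (1 - 2 * y ^+ 2) by apply: sqrtr_ge0.
have q : 4 * ((l * x) ^+ 2 * (l * y) ^+ 2) <= 4 * (x ^+ 2 * y ^+ 2).
  have lx0 : 0 <= (l * x) ^+ 2 by apply: sqr_ge0.
  nra.
set A := Num.sqrt (1 - 2 * x ^+ 2) in sx a0 h3.
set B := Num.sqrt (1 - 2 * y ^+ 2) in sy b0 h3.
set C := Num.sqrt (1 - 2 * (l * x) ^+ 2) in sx *.
set D := Num.sqrt (1 - 2 * (l * y) ^+ 2) in sy *.
have : (A + B) ^+ 2 <= (C + D) ^+ 2 by rewrite !expr2; nra.
lra.
Qed.

Lemma Ccomp_of_SF (p : pt R) : S2 p -> 0 < pz p -> SF (px p) (py p) -> Ccomp p.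
Proof.
move=> hS hz hSF.
have hS2 := S2_eq hS.
set x := px p in hS2 hSF *; set y := py p in hS2 hSF *.
have z0 : 0 <= pz p ^+ 2 by apply: sqr_ge0.
have r1 : x ^+ 2 + y ^+ 2 <= 1 by lra.
have x0 : 0 <= x ^+ 2 by apply: sqr_ge0.
have y0 : 0 <= y ^+ 2 by apply: sqr_ge0.
apply: (@connected_component_max _ _ (gam x y @` `[0, 1])).
- exists 0; first by rewrite /= in_itv /= lexx ler01.
  rewrite /gam /north !mul0r expr0n /= mul0r subr0 sqrtr1.
  by [].
- move=> q [l hl <-].
  have : 0 <= l <= 1 by move: hl; rewrite /= in_itv.
  case/andP => l0 l1.
  have l2 : l ^+ 2 <= 1 by rewrite expr2; nra.
  have l20 : 0 <= l ^+ 2 by apply: sqr_ge0.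
  split.
  + rewrite /S2 /= /dot /gam px_mk py_mk pz_mk -!expr2 sqr_sqrtr; last by nra.
    rewrite !exprMn; ring.
  + move=> /Gamma_notSF; apply.
    rewrite /gam px_mk py_mk; apply: SF_scale => //; by apply/andP.
- apply: connected_continuous_connected; first exact: segment_connected.
  by apply: continuous_subspaceT; apply: gam_cont.
- exists 1; first by rewrite /= in_itv /= lexx ler01.
  rewrite /gam !mul1r expr1n mul1r (pt_eta p); congr mkpt.
  rewrite (z_of hS hz); congr Num.sqrt; rewrite -/x -/y; ring.
Qed.

End G5.

Section G6.
Variable R : realType.

Lemma columns (u v w : pt R) :
  dot u u = 1 -> dot v v = 1 -> dot w w = 1 ->
  dot u v = 0 -> dot v w = 0 -> dot u w = 0 ->
  [/\ px u ^+ 2 + px v ^+ 2 + px w ^+ 2 = 1,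
      py u ^+ 2 + py v ^+ 2 + py w ^+ 2 = 1 &
      px u * py u + px v * py v + px w * py w = 0].
Proof.
rewrite /dot => huu hvv hww huv hvw huw.
pose r (i : 'I_3) := if (val i == 0)%N then u else if (val i == 1)%N then v else w.
pose c (p : pt R) (j : 'I_3) := if (val j == 0)%N then px p else if (val j == 1)%N then py p else pz p.
pose M := \matrix_(i < 3, j < 3) c (r i) j.
have H : M *m M^T = 1%:M.
  apply/matrixP => i k; rewrite !mxE.
  rewrite !big_ord_recr big_ord0 /= !mxE /=.
  case: i => [[|[|[|i]]] hi]; case: k => [[|[|[|k]]] hk] //=; rewrite /r /c /=; lra.
have H2 := mulmx1C H.
have E := fun i j => congr1 (fun A : 'M[R]_3 => A i j) H2.
have := E 0 0; have := E 1 1; have := E 0 1.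
rewrite !mxE !big_ord_recr !big_ord0 /= !mxE /r /c /= !expr2.
move=> e1 e2 e3.
split; lra.
Qed.

End G6.

Section G7.
Variable R : realType.
Local Open Scope classical_set_scope.

Lemma A_of_Fc (p : pt R) : S2 p -> 0 < pz p -> Fc (px p) (py p) -> Aregion p.
Proof.
move=> hS hz hF.
case: (pselect (SF (px p) (py p))) => h.
  by right; apply: Ccomp_of_SF.
by left; apply: Good_Gamma; split.
Qed.

Lemma z_ne0 (p : pt R) : S2 p -> Fc (px p) (py p) -> pz p != 0.
Proof.
move=> hS [f1 f2 f3]; apply/negP => /eqP hz.
have hS2 := S2_eq hS; rewrite hz expr0n /= addr0 in hS2.
have ex : px p ^+ 2 = 2^-1 by lra.
have ey : py p ^+ 2 = 2^-1 by lra.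
move: f3; rewrite ex ey (_ : 1 - 2 * 2^-1 = 0); last by field.
rewrite sqrtr0 addr0 expr2 mulr0 => h.
have : (4 : R) * (2^-1 * 2^-1) = 1 by field.
lra.
Qed.

Lemma key (q : pt R) : N0 q -> Fc (px q) (py q) -> False.
Proof.
case=> hS hN hF.
have hz := z_ne0 hS hF.
case: (ltgtP (pz q) 0) => h; last by rewrite h eqxx in hz.
- apply: hN; right; rewrite /negA /=.
  apply: A_of_Fc.
  + by move: hS; rewrite /S2 /= /dot /neg /= => <-; rewrite /px /py /pz /=; ring.
  + by rewrite /neg pz_mk; lra.
  + rewrite /neg px_mk py_mk; apply: Fc_neg; apply: Fc_swap; apply: Fc_neg; exact: Fc_swap.
- by apply: hN; left; apply: A_of_Fc.
Qed.

End G7.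

Local Open Scope classical_set_scope.

Theorem proposition3p5 (R : realType) :
  ~ (exists u v w : pt R,
       [/\ N0 u, N0 v & N0 w] /\
       [/\ dot u v = 0, dot v w = 0 & dot u w = 0]).
Proof.
move=> [u [v [w [[Nu Nv Nw] [huv hvw huw]]]]].
have [c1 c2 c3] := columns (Nu.1) (Nv.1) (Nw.1) huv hvw huw.
have [h|h|h] := CoreF c1 c2 c3.
- exact: key Nu h.
- exact: key Nv h.
- exact: key Nw h.
Qed.
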